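(* Let $A \in \mathbb{C}^{n \times n}$, and fix $A^-\in A\{1\}$ and $A^{GD}\in A\{GD\}$. Then $A^{GD1}=A^{GD}AA^{-}$ is the unique matrix $X \in \mathbb{C}^{n \times n}$ satisfying $$AX = P_{R(A),N(AA^{-})} \quad\text{and}\quad R(X)\subseteq R(A^{GD}A).$$
   Context: For $A\in\mathbb{C}^{n\times n}$, $ind(A)$ is the smallest nonnegative integer $k$ with $\mathrm{rank}(A^k)=\mathrm{rank}(A^{k+1})$. $A\{1\}$ is the set of matrices $X$ with $AXA=A$. With $k=ind(A)$, $A\{GD\}$ is the set of G-Drazin inverses of $A$: matrices $X$ with $AXA=A$, $XA^{k+1}=A^k$, $A^{k+1}X=A^k$. $R(\cdot)$, $N(\cdot)$ denote range and null space; $P_{S,T}$ is the projector onto $S$ along $T$. *)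

(* Defs.v *)
From HB Require Import structures.
From mathcomp Require Import all_boot all_order all_algebra zify.
From mathcomp Require Export complex.
From mathcomp Require Export reals.
Set Implicit Arguments. Unset Strict Implicit. Unset Printing Implicit Defensive.
Import Order.TTheory GRing.Theory Num.Theory.
Local Open Scope ring_scope.

Section GDrazin.
Variables (F : fieldType) (n : nat).
Implicit Types A X P : 'M[F]_n.

Lemma index_exists A : exists k, \rank (A ^+ k) == \rank (A ^+ k.+1).
Proof.
have le_rk k : (\rank (A ^+ k.+1) <= \rank (A ^+ k))%N.
  by rewrite exprSr -mulmxE mxrankM_maxl.
case: (boolP [exists k : 'I_n.+1, \rank (A ^+ k) == \rank (A ^+ k.+1)]).
  by case/existsP=> k Hk; exists k.
move/existsPn=> H.
have Hb k : (k <= n.+1)%N -> (\rank (A ^+ k) + k <= n)%N.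
  elim: k => [|k IH] Hk; first by rewrite expr0 addn0 mxrank1.
  have := IH (ltnW Hk); have := H (Ordinal Hk); have := le_rk k.
  move=> h1 h2 h3; rewrite /= in h2.
  have h4 : (\rank (A ^+ k.+1) < \rank (A ^+ k))%N by rewrite ltn_neqAle eq_sym h2 h1.
  lia.
by have := Hb n.+1 (leqnn _); lia.
Qed.

Definition ind A : nat := ex_minn (index_exists A).

Definition inner_inverse A X : Prop := A *m X *m A = A.

Definition GDrazin_inverse A X : Prop :=
  let k := ind A in
  [/\ A *m X *m A = A, X *m A ^+ k.+1 = A ^+ k & A ^+ k.+1 *m X = A ^+ k].

(* Subspaces of F^n (column vectors) are represented, as in mxalgebra, by
   matrices whose ROW space is the subspace (vectors written transposed).
   R(A) = column space of A = row space of A^T.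
   N(A) = {x | A x = 0} = {y^T | y^T A^T = 0} = row space of kermx (A^T). *)
Definition range A : 'M[F]_n := A^T.
Definition nullspace A : 'M[F]_n := kermx A^T.

Definition is_projector_onto_along P (S T : 'M[F]_n) : Prop :=
  [/\ P *m P = P, (range P == S)%MS & (nullspace P == T)%MS].

End GDrazin.

(* Main.v *)
Require Import Defs.
From HB Require Import structures.
From mathcomp Require Import all_boot all_order all_algebra complex reals.
Import GRing.Theory Num.Theory.
Local Open Scope ring_scope.

Lemma proj_uniq (F : fieldType) n (A Am P : 'M[F]_n) :
  A *m Am *m A = A ->
  is_projector_onto_along P (range A) (nullspace (A *m Am)) -> P = A *m Am.
Proof.
move=> h [PP rP nP].
have AMid: A *m Am *m (A *m Am) = A *m Am by rewrite mulmxA h.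
move/andP: rP => [r1 r2]; move/andP: nP => [n1 n2].
rewrite /range /nullspace in r1 r2 n1 n2.
have e1: P *m (1%:M - A *m Am) = 0.
  apply: trmx_inj; rewrite trmx0; apply/eqP; rewrite trmx_mul -sub_kermx.
  apply: (submx_trans _ n2).
  by rewrite sub_kermx -trmx_mul mulmxBr mulmx1 AMid subrr trmx0.
have e2: P *m (A *m Am) = A *m Am.
  have: ((A *m Am)^T <= P^T)%MS.
    by apply: submx_trans r2; rewrite trmx_mul submxMl.
  case/submxP => D eD.
  have eD' : A *m Am = P *m D^T by rewrite -[A *m Am]trmxK eD trmx_mul trmxK.
  by rewrite eD' mulmxA PP.
by move: e1; rewrite mulmxBr mulmx1 e2 => /eqP; rewrite subr_eq0 => /eqP.
Qed.

Theorem theorem2p4 (R : realType) (n : nat) (A Am AGD : 'M[R[i]]_n) :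
  inner_inverse A Am ->
  GDrazin_inverse A AGD ->
  let AGD1 := AGD *m A *m Am in
  (is_projector_onto_along (A *m AGD1) (range A) (nullspace (A *m Am))
     /\ (range AGD1 <= range (AGD *m A))%MS)
  /\ (forall X : 'M[R[i]]_n,
        is_projector_onto_along (A *m X) (range A) (nullspace (A *m Am)) ->
        (range X <= range (AGD *m A))%MS ->
        X = AGD1).
Proof.
rewrite /inner_inverse => h1 [h2 _ _].
set AGD1 := AGD *m A *m Am.
have AMid: A *m Am *m (A *m Am) = A *m Am by rewrite mulmxA h1.
have eAX: A *m AGD1 = A *m Am by rewrite /AGD1 !mulmxA h2.
split.
  split; last by rewrite /range /AGD1 trmx_mul submxMl.
  rewrite eAX; split => //.
    apply/andP; split; rewrite /range trmx_mul ?submxMl //.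
    have eA : A^T = A^T *m Am^T *m A^T by rewrite -!trmx_mul mulmxA h1.
    by rewrite {1}eA -mulmxA submxMl.
  by rewrite /nullspace; apply/andP; split.
move=> X hX hr.
have eAX' : A *m X = A *m Am := @proj_uniq _ _ A Am (A *m X) h1 hX.
move: hr; rewrite /range => /submxP [D eD].
have eX : X = AGD *m A *m D^T by rewrite -[X]trmxK eD trmx_mul trmxK.
have GAid : AGD *m A *m (AGD *m A) = AGD *m A by rewrite -mulmxA [A *m _]mulmxA h2.
have eX2 : X = AGD *m (A *m X).
  by rewrite mulmxA {2}eX mulmxA GAid -eX.
by rewrite {1}eX2 eAX' mulmxA.
Qed.
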